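(* Let $A=\{a_1<a_2<a_3<\cdots\}\subseteq\mathbb{N}$ be an infinite set with $\lambda(A)>1$. Then $\underline{\underline{d}}(A)=\underline{d}_\infty(A)=0$.
   Context: $\mathbb{N}=\{1,2,3,\dots\}$. For an infinite set $A=\{a_1<a_2<\cdots\}$, the gap density is $\lambda(A)=\limsup_{n\to\infty}\frac{a_{n+1}}{a_n}$. For $A\subseteq\mathbb{N}$ let $A(n)=|A\cap[1,n]|$; $\mathcal{D}$ is the collection of sets for which $d(A)=\lim_{n\to\infty}A(n)/n$ exists; $\underline{\underline{d}}(A)=\sup\{d(B);\ B\subseteq A,\ B\in\mathcal{D}\}$. For $\alpha\ge-1$ put $A_\alpha(n)=\sum_{k=1}^n\chi_A(k)k^\alpha$, $\mathbb{N}_\alpha(n)=\sum_{k=1}^nk^\alpha$, $\underline{d}_\alpha(A)=\liminf_{n\to\infty}\frac{A_\alpha(n)}{\mathbb{N}_\alpha(n)}$ and $\underline{d}_\infty(A)=\inf_{\alpha\ge-1}\underline{d}_\alpha(A)$. *)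

(* Defs.v *)
From Stdlib Require Import Reals ClassicalEpsilon.
From Coquelicot Require Import Coquelicot.
Open Scope R_scope.

(* Subsets of N = {1,2,...} are predicates on nat; index 0 is never counted. *)
Definition chi (A : nat -> Prop) (k : nat) : R :=
  if excluded_middle_informative (A k) then 1 else 0.

Definition Acount (A : nat -> Prop) (n : nat) : R :=
  sum_n_m (chi A) 1 n.

Definition gap_density (a : nat -> nat) : Rbar :=
  LimSup_seq (fun n => INR (a (S n)) / INR (a n)).

Definition lower_dd (A : nat -> Prop) : Rbar :=
  Lub_Rbar (fun x => exists B : nat -> Prop,
     (forall k, B k -> A k) /\ is_lim_seq (fun n => Acount B n / INR n) x).

Definition Acount_alpha (A : nat -> Prop) (alpha : R) (n : nat) : R :=
  sum_n_m (fun k => chi A k * Rpower (INR k) alpha) 1 n.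

Definition Ncount_alpha (alpha : R) (n : nat) : R :=
  sum_n_m (fun k => Rpower (INR k) alpha) 1 n.

Definition lower_d_alpha (A : nat -> Prop) (alpha : R) : Rbar :=
  LimInf_seq (fun n => Acount_alpha A alpha n / Ncount_alpha alpha n).

Definition lower_d_infty (A : nat -> Prop) : Rbar :=
  Glb_Rbar (fun x => exists alpha : R, -1 <= alpha /\ lower_d_alpha A alpha = Finite x).

(* Main.v *)
Require Import Defs.
From Stdlib Require Import Reals Lra Lia Psatz Arith ZArith ClassicalEpsilon.
From Coquelicot Require Import Coquelicot.
Open Scope R_scope.

Lemma sum_le_loc (f g : nat -> R) n m :
  (forall k, (n <= k <= m)%nat -> f k <= g k) -> sum_n_m f n m <= sum_n_m g n m.
Proof.
  induction m as [|m IH]; intros H.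
  - destruct n. rewrite !sum_n_n. apply H; lia.
    rewrite !sum_n_m_zero by lia. apply Rle_refl.
  - destruct (le_lt_dec n (S m)).
    + destruct (Nat.eq_dec n (S m)).
      * subst. rewrite !sum_n_n. apply H; lia.
      * rewrite !sum_n_Sm by lia. apply Rplus_le_compat.
        apply IH; intros; apply H; lia. apply H; lia.
    + rewrite !sum_n_m_zero by lia. apply Rle_refl.
Qed.

Lemma sum_nonneg (f : nat -> R) n m : (forall k, 0 <= f k) -> 0 <= sum_n_m f n m.
Proof.
  intros H. assert (E: sum_n_m (fun _ : nat => 0) n m = 0)
    by apply (sum_n_m_const_zero (G:=R_AbelianMonoid)).
  rewrite <- E. apply sum_n_m_le. exact H.
Qed.

Lemma sum_mult_l (c : R) (f : nat -> R) n m :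
  c * sum_n_m f n m = sum_n_m (fun k => c * f k) n m.
Proof. symmetry; apply (sum_n_m_mult_l (K:=R_Ring)). Qed.

Lemma sum_shift (f : nat -> R) d n m :
  sum_n_m (fun k => f (k + d)%nat) n m = sum_n_m f (n + d) (m + d).
Proof.
  revert f. induction d; intros f.
  - rewrite !Nat.add_0_r. apply sum_n_m_ext. intros; now rewrite Nat.add_0_r.
  - replace (n + S d)%nat with (S (n + d)) by lia.
    replace (m + S d)%nat with (S (m + d)) by lia.
    rewrite <- sum_n_m_S. rewrite <- (IHd (fun j => f (S j))).
    apply sum_n_m_ext. intros; f_equal; lia.
Qed.

Lemma pow_sum_ineq (p m N : nat) : (1 <= m <= N)%nat ->
  INR N ^ p * sum_n_m (fun k => INR k ^ p) 1 m <=
  INR m ^ p * sum_n_m (fun k => INR k ^ p) 1 N.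
Proof.
  intros Hm.
  rewrite (sum_n_m_Chasles _ 1 (N - m) N) by lia.
  change (plus ?x ?y) with (x + y).
  assert (H0 : 0 <= sum_n_m (fun k => INR k ^ p) 1 (N - m)).
  { apply sum_nonneg. intros; apply pow_le, pos_INR. }
  assert (Hm0 : 0 <= INR m ^ p) by (apply pow_le, pos_INR).
  assert (Hs : sum_n_m (fun k => INR k ^ p) (S (N - m)) N =
               sum_n_m (fun k => INR (k + (N - m)) ^ p) 1 m).
  { rewrite (sum_shift (fun k => INR k ^ p)). f_equal; lia. }
  rewrite Hs.
  apply Rle_trans with (INR m ^ p * sum_n_m (fun k => INR (k + (N - m)) ^ p) 1 m).
  - rewrite !sum_mult_l.
    apply sum_le_loc. intros k Hk.
    rewrite <- !Rpow_mult_distr. apply pow_incr. split.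
    + apply Rmult_le_pos; apply pos_INR.
    + rewrite <- !mult_INR. apply le_INR. nia.
  - nra.
Qed.

Lemma div_nonneg x y : 0 <= x -> 0 <= y -> 0 <= x / y.
Proof.
  intros Hx Hy. destruct (Req_dec y 0) as [->|Hy0].
  - unfold Rdiv; rewrite Rinv_0; lra.
  - apply Rmult_le_pos; [lra|]. left; apply Rinv_0_lt_compat; lra.
Qed.

Lemma liminf_nonneg (u : nat -> R) : (forall n, 0 <= u n) ->
  forall l, LimInf_seq u = Finite l -> 0 <= l.
Proof.
  intros Hu l E. destruct (ex_LimInf_seq u) as [l' H].
  rewrite (is_LimInf_seq_unique _ _ H) in E. subst l'.
  destruct (Rle_lt_dec 0 l) as [|Hl]; [auto|].
  assert (He : 0 < - l / 2) by lra.
  destruct (H (mkposreal _ He)) as [H1 _]. destruct (H1 O) as [n [_ Hn]].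
  simpl in Hn. specialize (Hu n). lra.
Qed.

Lemma liminf_upper (u : nat -> R) b : (forall n, 0 <= u n) ->
  (forall K, exists n, (K <= n)%nat /\ u n <= b) ->
  exists l, LimInf_seq u = Finite l /\ l <= b.
Proof.
  intros Hu Hb. destruct (ex_LimInf_seq u) as [l H].
  rewrite (is_LimInf_seq_unique _ _ H). destruct l as [l| |].
  - exists l; split; auto.
    destruct (Rle_lt_dec l b) as [|Hl]; [auto|].
    assert (He : 0 < (l - b) / 2) by lra.
    destruct (H (mkposreal _ He)) as [_ [N HN]].
    destruct (Hb N) as [n [Hn Hn']]. specialize (HN n Hn). simpl in HN. lra.
  - destruct (H b) as [N HN]. destruct (Hb N) as [n [Hn Hn']].
    specialize (HN n Hn). lra.
  - destruct (H (-1) O) as [n [_ Hn]]. specialize (Hu n). lra.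
Qed.

Section Main.
Variables (A : nat -> Prop) (a : nat -> nat).
Hypothesis Ha_incr : forall n, (a n < a (S n))%nat.
Hypothesis Ha_pos : (1 <= a 0)%nat.
Hypothesis HA : forall k, A k <-> exists n, a n = k.
Hypothesis Hlam : Rbar_lt (Finite 1) (gap_density a).

Lemma a_mono i j : (i <= j)%nat -> (a i <= a j)%nat.
Proof.
  induction 1. lia. specialize (Ha_incr m). lia.
Qed.

Lemma a_ge n : (S n <= a n)%nat.
Proof.
  induction n. auto. specialize (Ha_incr n). lia.
Qed.

Lemma gap_sum (g : nat -> R) n N : (forall k, ~ A k -> g k = 0) ->
  (a n <= N)%nat -> (N < a (S n))%nat -> sum_n_m g 1 N = sum_n_m g 1 (a n).
Proof.
  intros Hg H1 H2.
  rewrite (sum_n_m_Chasles g 1 (a n) N) by lia.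
  rewrite (sum_n_m_ext_loc g (fun _ => zero) (S (a n)) N).
  - rewrite sum_n_m_const_zero, plus_zero_r. reflexivity.
  - intros k Hk. rewrite Hg; [reflexivity|].
    intros HAk. apply HA in HAk. destruct HAk as [j Hj]. subst k.
    destruct (le_lt_dec j n).
    + pose proof (a_mono j n l). lia.
    + pose proof (a_mono (S n) j l). lia.
Qed.

Lemma gap_c : exists c, 1 < c /\
  forall K, exists n, (K <= n)%nat /\ c * INR (a n) < INR (a (S n)).
Proof.
  unfold gap_density in Hlam.
  set (u := fun n => INR (a (S n)) / INR (a n)) in Hlam.
  assert (Hpos : forall n, 0 < INR (a n)).
  { intros n. apply lt_0_INR. pose proof (a_ge n). lia. }
  assert (Hc : forall c n, c < u n -> c * INR (a n) < INR (a (S n))).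
  { intros c n Hn. unfold u in Hn. specialize (Hpos n).
    apply (Rmult_lt_compat_r (INR (a n))) in Hn; [|auto].
    replace (INR (a (S n)) / INR (a n) * INR (a n)) with (INR (a (S n))) in Hn
      by (field; lra). lra. }
  destruct (ex_LimSup_seq u) as [l H].
  rewrite (is_LimSup_seq_unique _ _ H) in Hlam.
  destruct l as [l| |]; simpl in Hlam.
  - exists ((1 + l) / 2). split; [lra|].
    assert (He : 0 < (l - 1) / 2) by lra.
    destruct (H (mkposreal _ He)) as [H1 _].
    intros K. destruct (H1 K) as [n [Hn Hn']]. exists n. split; auto.
    apply Hc. simpl in Hn'. lra.
  - exists 2. split; [lra|]. intros K. destruct (H 2 K) as [n [Hn Hn']].
    exists n; split; auto.
  - contradiction.
Qed.

Lemma good_pairs : exists q, 0 < q < 1 /\ forall K, exists m N,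
  (K <= m)%nat /\ (1 <= m)%nat /\ (m <= N)%nat /\ INR m <= q * INR N /\
  forall g : nat -> R, (forall k, ~ A k -> g k = 0) ->
    sum_n_m g 1 N = sum_n_m g 1 m.
Proof.
  destruct gap_c as [c [Hc1 Hc]].
  exists (2 / (1 + c)). split.
  { split. apply Rdiv_lt_0_compat; lra.
    apply (Rmult_lt_reg_r (1 + c)); [lra|].
    replace (2 / (1 + c) * (1 + c)) with 2 by (field; lra). lra. }
  destruct (archimed (2 / (c - 1))) as [Hz _].
  set (z := up (2 / (c - 1))) in *.
  assert (Hz0 : (0 < z)%Z).
  { apply lt_IZR. assert (0 < 2 / (c - 1)) by (apply Rdiv_lt_0_compat; lra). lra. }
  set (K0 := Z.to_nat z).
  assert (HK0 : INR K0 = IZR z).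
  { unfold K0. rewrite INR_IZR_INZ. f_equal. apply Z2Nat.id. lia. }
  intros K. destruct (Hc (Nat.max K K0)) as [n [Hn Hn']].
  exists (a n), (a (S n) - 1)%nat.
  pose proof (a_ge n) as Hge. pose proof (Ha_incr n) as Hi.
  split; [lia|]. split; [lia|]. split; [lia|]. split.
  - rewrite minus_INR by lia. change (INR 1) with 1.
    assert (HK : IZR z <= INR (a n)).
    { rewrite <- HK0. apply le_INR. lia. }
    assert (H2 : 2 <= INR (a n) * (c - 1)).
    { replace 2 with (2 / (c - 1) * (c - 1)) by (field; lra).
      apply Rmult_le_compat_r; lra. }
    apply (Rmult_le_reg_r (1 + c)); [lra|].
    replace (2 / (1 + c) * (INR (a (S n)) - 1) * (1 + c))
      with (2 * (INR (a (S n)) - 1)) by (field; lra).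
    nra.
  - intros g Hg. apply (gap_sum g n); auto; lia.
Qed.


Lemma chi_nA (B : nat -> Prop) k : ~ B k -> chi B k = 0.
Proof. intros H. unfold chi. destruct excluded_middle_informative; tauto. Qed.

Lemma chi_bounds (B : nat -> Prop) k : 0 <= chi B k <= 1.
Proof. unfold chi. destruct excluded_middle_informative; lra. Qed.

Lemma Rpower_pos' x y : 0 < Rpower x y.
Proof. unfold Rpower. apply exp_pos. Qed.

Lemma ratio_nonneg alpha n :
  0 <= Acount_alpha A alpha n / Ncount_alpha alpha n.
Proof.
  apply div_nonneg; apply sum_nonneg; intros k.
  - apply Rmult_le_pos. apply chi_bounds. left; apply Rpower_pos'.
  - left; apply Rpower_pos'.
Qed.

Lemma Spos p N : (1 <= N)%nat -> 0 < sum_n_m (fun k => INR k ^ p) 1 N.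
Proof.
  intros H. destruct (Nat.eq_dec N 1) as [->|].
  - rewrite sum_n_n. simpl INR. rewrite pow1. lra.
  - rewrite (sum_n_m_Chasles _ 1 1 N) by lia. change (plus ?x ?y) with (x + y).
    rewrite sum_n_n. simpl INR. rewrite pow1.
    assert (0 <= sum_n_m (fun k => INR k ^ p) 2 N).
    { apply sum_nonneg. intros; apply pow_le, pos_INR. }
    lra.
Qed.

Lemma Ncount_pow p x : Ncount_alpha (INR p) x = sum_n_m (fun k => INR k ^ p) 1 x.
Proof.
  unfold Ncount_alpha. apply sum_n_m_ext_loc. intros k Hk.
  apply Rpower_pow. apply lt_0_INR. lia.
Qed.

Lemma part2 : lower_d_infty A = Finite 0.
Proof.
  destruct (good_pairs) as [q [Hq Hgood]].
  set (T := fun x => exists alpha : R, -1 <= alpha /\ lower_d_alpha A alpha = Finite x).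
  assert (HT0 : forall x, T x -> 0 <= x).
  { intros x [al [_ E]]. unfold lower_d_alpha in E.
    exact (liminf_nonneg _ (ratio_nonneg al) x E). }
  assert (HTe : forall p, exists x, T x /\ x <= q ^ p).
  { intros p.
    destruct (liminf_upper (fun n => Acount_alpha A (INR p) n / Ncount_alpha (INR p) n)
       (q ^ p) (ratio_nonneg (INR p))) as [l [E Hl]].
    { intros K. destruct (Hgood K) as [m [N [HKm [Hm1 [HmN [Hq' Hsum]]]]]].
      exists N. split; [lia|].
      rewrite !Ncount_pow.
      unfold Acount_alpha. rewrite Hsum.
      2:{ intros k Hk. rewrite chi_nA; auto. lra. }
      set (Sm := sum_n_m (fun k => INR k ^ p) 1 m).
      set (SN := sum_n_m (fun k => INR k ^ p) 1 N).
      assert (HSN : 0 < SN) by (apply Spos; lia).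
      assert (HA1 : sum_n_m (fun k => chi A k * Rpower (INR k) (INR p)) 1 m <= Sm).
      { unfold Sm. rewrite <- Ncount_pow. apply sum_n_m_le. intros k.
        pose proof (chi_bounds A k). pose proof (Rpower_pos' (INR k) (INR p)). nra. }
      assert (Hineq := pow_sum_ineq p m N ltac:(lia)). fold Sm SN in Hineq.
      assert (HNp : 0 < INR N ^ p) by (apply pow_lt, lt_0_INR; lia).
      assert (Hmq : INR m ^ p <= q ^ p * INR N ^ p).
      { rewrite <- Rpow_mult_distr. apply pow_incr. split; [apply pos_INR|lra]. }
      assert (HSm : Sm <= q ^ p * SN).
      { apply (Rmult_le_reg_l (INR N ^ p)); [auto|].
        assert (0 <= SN) by lra. nra. }
      apply (Rmult_le_reg_r SN); [auto|]. unfold Rdiv.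
      rewrite Rmult_assoc, Rinv_l by lra. lra. }
    exists l. split; auto. exists (INR p). split; auto.
    pose proof (pos_INR p). lra. }
  destruct (Glb_Rbar_correct T) as [Hlb Hgl].
  unfold lower_d_infty. fold T.
  assert (H0 : Rbar_le (Finite 0) (Glb_Rbar T)).
  { apply Hgl. intros x Hx. simpl. apply HT0. auto. }
  destruct (Glb_Rbar T) as [g| |] eqn:Eg.
  - simpl in H0. f_equal.
    destruct (Rle_lt_dec g 0) as [|Hg]; [lra|].
    destruct (pow_lt_1_zero q ltac:(rewrite Rabs_pos_eq; lra) g Hg) as [N HN].
    specialize (HN N (Nat.le_refl N)). rewrite Rabs_pos_eq in HN by (apply pow_le; lra).
    destruct (HTe N) as [x [Hx Hx']]. specialize (Hlb x Hx). simpl in Hlb. lra.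
  - destruct (HTe O) as [x [Hx _]]. specialize (Hlb x Hx). simpl in Hlb. contradiction.
  - simpl in H0. contradiction.
Qed.

Lemma part1 : lower_dd A = Finite 0.
Proof.
  destruct (good_pairs) as [q [Hq Hgood]].
  set (SS := fun x : R => exists B : nat -> Prop,
     (forall k, B k -> A k) /\ is_lim_seq (fun n => Acount B n / INR n) x).
  assert (HS0 : SS 0).
  { exists (fun _ => False). split; [tauto|].
    apply is_lim_seq_ext with (fun _ => 0); [|apply is_lim_seq_const].
    intros n. unfold Acount.
    rewrite (sum_n_m_ext_loc _ (fun _ => zero)).
    - rewrite sum_n_m_const_zero. change (zero : R) with 0. unfold Rdiv; ring.
    - intros k _. rewrite chi_nA; auto. }
  assert (HSle : forall x, SS x -> x <= 0).
  { intros x [B [HB Hlim]].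
    destruct (Rle_lt_dec x 0) as [|Hx]; [auto|exfalso].
    set (eps := x * (1 - q) / (2 * (1 + q))).
    assert (He : 0 < eps).
    { unfold eps. apply Rdiv_lt_0_compat; nra. }
    apply is_lim_seq_spec in Hlim. assert (Hl2 : forall e : posreal, eventually (fun n => Rabs (Acount B n / INR n - x) < e)) by exact Hlim. destruct (Hl2 (mkposreal _ He)) as [N0 HN0].
    simpl in HN0.
    destruct (Hgood N0) as [m [N [HKm [Hm1 [HmN [Hq' Hsum]]]]]].
    assert (E : Acount B N = Acount B m).
    { unfold Acount. apply Hsum. intros k Hk. apply chi_nA. intros HBk; auto. }
    pose proof (HN0 m HKm) as H1. pose proof (HN0 N ltac:(lia)) as H2.
    rewrite E in H2.
    apply Rabs_def2 in H1. apply Rabs_def2 in H2.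
    set (C := Acount B m) in *.
    assert (HC : 0 <= C).
    { unfold C, Acount. apply sum_nonneg. intros; apply chi_bounds. }
    assert (Hm0 : 0 < INR m) by (apply lt_0_INR; lia).
    assert (HN0' : 0 < INR N) by (apply lt_0_INR; lia).
    assert (Hr : C / INR N <= q * (C / INR m)).
    { replace (C / INR N) with ((C / INR m) * (INR m / INR N)) by (field; lra).
      rewrite (Rmult_comm q). apply Rmult_le_compat_l.
      apply div_nonneg; lra.
      apply (Rmult_le_reg_r (INR N)); auto. unfold Rdiv.
      rewrite Rmult_assoc, Rinv_l by lra. lra. }
    assert (Hq2 : q * (C / INR m) < q * (x + eps)).
    { apply Rmult_lt_compat_l; lra. }
    assert (Heps : eps * (2 * (1 + q)) = x * (1 - q)) by (unfold eps; field; lra).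
    nra. }
  destruct (Lub_Rbar_correct SS) as [Hub Hl].
  unfold lower_dd. fold SS.
  assert (H1 : Rbar_le (Finite 0) (Lub_Rbar SS)) by (apply Hub; auto).
  assert (H2 : Rbar_le (Lub_Rbar SS) (Finite 0)).
  { apply Hl. intros x Hx. simpl. auto. }
  destruct (Lub_Rbar SS); simpl in *; try contradiction. f_equal; lra.
Qed.

End Main.

Theorem proposition4p6 (A : nat -> Prop) (a : nat -> nat)
  (Ha_incr : forall n, (a n < a (S n))%nat)
  (Ha_pos : (1 <= a 0)%nat)
  (HA : forall k, A k <-> exists n, a n = k)
  (Hlam : Rbar_lt (Finite 1) (gap_density a)) :
  lower_dd A = Finite 0 /\ lower_d_infty A = Finite 0.
Proof.
  split; [apply (part1 A a) | apply (part2 A a)]; auto.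
Qed.
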